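(* Let $0<\alpha<1$ and $p,q>0$. If $R_{\alpha,p}(A,B)\le_\lambda\mathcal{A}_{\alpha,q}(A,B)$ holds for all positive definite $2\times2$ matrices $A,B$, then $\alpha(1-\alpha)p\le q$.
   Context: For positive definite $A,B$: $R_{\alpha,p}(A,B):=\bigl(A^{\frac{1-\alpha}{2}p}B^{\alpha p}A^{\frac{1-\alpha}{2}p}\bigr)^{1/p}$ and $\mathcal{A}_{\alpha,q}(A,B):=((1-\alpha)A^q+\alpha B^q)^{1/q}$. For positive semidefinite $n\times n$ matrices $X,Y$ with eigenvalues $\lambda_1(X)\ge\dots\ge\lambda_n(X)$ (with multiplicities), $X\le_\lambda Y$ means $\lambda_i(X)\le\lambda_i(Y)$ for each $i=1,\dots,n$. *)

(* Defs.v *)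
From HB Require Import structures.
From mathcomp Require Import all_boot all_order all_algebra.
From mathcomp Require Import sesquilinear spectral.
From mathcomp Require Import reals exp.
From mathcomp Require Import complex.
From Stdlib Require Import ClassicalEpsilon.

Set Implicit Arguments.
Unset Strict Implicit.
Unset Printing Implicit Defensive.

Import Order.TTheory GRing.Theory Num.Theory.
Local Open Scope ring_scope.
Local Open Scope sesquilinear_scope.

Section MatrixFunctions.
Variable R : realType.
Local Notation C := R[i].

Definition realC (r : R) : C := Complex r 0.

Definition ctrmx m n (M : 'M[C]_(m, n)) : 'M[C]_(n, m) := M ^t*.

Definition posdef n (A : 'M[C]_n) : Prop :=
  ctrmx A = A /\ forall v : 'rV[C]_n, v != 0 -> 0 < (v *m A *m ctrmx v) 0 0.

Definition spectral_decomp n (A : 'M[C]_n) (p : 'M[C]_n * 'rV[R]_n) : Prop :=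
  p.1 \is unitarymx /\ A = ctrmx p.1 *m diag_mx (map_mx realC p.2) *m p.1.

(* some spectral decomposition (exists for Hermitian matrices) *)
Definition some_decomp n (A : 'M[C]_n) : 'M[C]_n * 'rV[R]_n :=
  epsilon (inhabits (1%:M, 0)) (spectral_decomp A).

Definition mpow n (A : 'M[C]_n) (t : R) : 'M[C]_n :=
  let p := some_decomp A in
  ctrmx p.1 *m diag_mx (map_mx (fun x => realC (powR x t)) p.2) *m p.1.

Definition eigs n (X : 'M[C]_n) : seq R :=
  sort (fun x y : R => y <= x) [seq (some_decomp X).2 0 i | i <- enum 'I_n].

(* lambda_i(X), i = 0 .. n-1 (0-based index) *)
Definition lambda n (X : 'M[C]_n) (i : 'I_n) : R := nth 0 (eigs X) i.

Definition le_lambda n (X Y : 'M[C]_n) : Prop :=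
  forall i : 'I_n, lambda X i <= lambda Y i.

Definition Rmean n (alpha p : R) (A B : 'M[C]_n) : 'M[C]_n :=
  mpow (mpow A ((1 - alpha) * p / 2) *m mpow B (alpha * p)
          *m mpow A ((1 - alpha) * p / 2)) (p^-1).

Definition Amean n (alpha q : R) (A B : 'M[C]_n) : 'M[C]_n :=
  mpow (realC (1 - alpha) *: mpow A q + realC alpha *: mpow B q) (q^-1).

End MatrixFunctions.

(* Main.v *)
Require Import Defs.
From HB Require Import structures.
From mathcomp Require Import all_boot all_order all_algebra.
From mathcomp Require Import sesquilinear spectral.
From mathcomp Require Import reals exp.
From mathcomp Require Import complex.
From mathcomp Require Import ring lra.
From Stdlib Require Import ClassicalEpsilon.
Import Order.TTheory GRing.Theory Num.Theory.
Local Open Scope ring_scope.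

Section Helpers.
Local Open Scope sesquilinear_scope.
Context {R : realType}.
Local Notation C := R[i].
Local Notation realC := (@realC R).

Lemma ctrmx_mul m n k (A : 'M[C]_(m,n)) (B : 'M[C]_(n,k)) :
  ctrmx (A *m B) = ctrmx B *m ctrmx A.
Proof. by rewrite /ctrmx trmx_mul map_mxM. Qed.

Lemma ctrmxK m n (A : 'M[C]_(m,n)) : ctrmx (ctrmx A) = A.
Proof. exact: trmxCK. Qed.

Lemma ctrmxD m n (A B : 'M[C]_(m,n)) : ctrmx (A + B) = ctrmx A + ctrmx B.
Proof. by rewrite /ctrmx linearD /= map_mxD. Qed.

Lemma conj_realC (r : R) : (realC r)^* = realC r.
Proof. by apply/eqP; rewrite eq_complex /= oppr0 !eqxx. Qed.

Lemma ctrmxZ m n (r : R) (A : 'M[C]_(m,n)) : ctrmx (realC r *: A) = realC r *: ctrmx A.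
Proof. by apply/matrixP => i j; rewrite !mxE rmorphM /= conj_realC. Qed.

Lemma ctrmx_diag n (d : 'rV[R]_n) :
  ctrmx (diag_mx (map_mx realC d)) = diag_mx (map_mx realC d).
Proof.
apply/matrixP => i j; rewrite !mxE; case: (eqVneq i j) => [->|hij].
  by rewrite !mulr1n conj_realC.
by rewrite !mulr0n conjC0.
Qed.

Lemma unitary_r {n} {U : 'M[C]_n} : U \is unitarymx -> U *m ctrmx U = 1%:M.
Proof. by move/unitarymxP. Qed.

Lemma unitary_l {n} {U : 'M[C]_n} : U \is unitarymx -> ctrmx U *m U = 1%:M.
Proof. by move/unitary_r/mulmx1C. Qed.

Lemma decomp_some n (X : 'M[C]_n) p : spectral_decomp X p -> spectral_decomp X (some_decomp X).
Proof. by move=> h; apply: epsilon_spec; exists p. Qed.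

Lemma realC_inj : injective realC.
Proof. by move=> x y []. Qed.

Lemma real_realC (z : C) : z \is Num.real -> realC (complex.Re z) = z.
Proof.
case: z => a b; rewrite realE !lecE /= => /orP[] /andP[/eqP hb _]; by rewrite /realC hb.
Qed.

Lemma herm_decomp n (X : 'M[C]_n) : ctrmx X = X -> exists p, spectral_decomp X p.
Proof.
move=> hX.
have hH : X \is hermsymmx by apply/is_hermitianmxP; rewrite expr0 scale1r; exact: esym.
have /orthomx_spectral_subproof [[P D] /= hP E] := hermitian_normalmx hH.
have hPi : invmx P = ctrmx P by apply: invmx_unitary.
rewrite hPi in E.
have hD : diag_mx D = P *m X *m ctrmx P.
  by rewrite E !mulmxA (unitary_r hP) mul1mx -mulmxA (unitary_r hP) mulmx1.
have hD2 : ctrmx (diag_mx D) = diag_mx D by rewrite hD !ctrmx_mul ctrmxK hX mulmxA.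
exists (P, map_mx (@complex.Re R) D); split; first exact: hP.
rewrite /=.
apply: (eq_trans E); congr (_ *m _ *m _); congr diag_mx.
apply/matrixP => i j; rewrite !mxE ord1.
have := congr1 (fun M : 'M[C]_n => M j j) hD2.
rewrite !mxE eqxx !mulr1n.
case: (D 0 j) => a b /= [] hb.
rewrite /realC; congr Complex; lra.
Qed.
Lemma decomp_fun_uniq n (X : 'M[C]_n) U d W e (f : R -> R) :
  spectral_decomp X (U,d) -> spectral_decomp X (W,e) ->
  ctrmx U *m diag_mx (map_mx (fun x => realC (f x)) d) *m U =
  ctrmx W *m diag_mx (map_mx (fun x => realC (f x)) e) *m W.
Proof.
case=> /= hU XU [] /= hW XW.
have hUr := unitary_r hU; have hUl := unitary_l hU.
have hWr := unitary_r hW; have hWl := unitary_l hW.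
set T := W *m ctrmx U.
have hT : T *m diag_mx (map_mx realC d) = diag_mx (map_mx realC e) *m T.
  have h1 : W *m X *m ctrmx U = T *m diag_mx (map_mx realC d).
    by rewrite {1}XU /T !mulmxA -[_ *m U *m ctrmx U]mulmxA hUr mulmx1.
  have h2 : W *m X *m ctrmx U = diag_mx (map_mx realC e) *m T.
    by rewrite {1}XW /T !mulmxA hWr mul1mx -!mulmxA.
  by rewrite -h1 h2.
have hTF : T *m diag_mx (map_mx (fun x => realC (f x)) d) =
           diag_mx (map_mx (fun x => realC (f x)) e) *m T.
  move: hT; clearbody T => hT.
  apply/matrixP => i j; rewrite mul_mx_diag mul_diag_mx !mxE.
  have := congr1 (fun M : 'M[C]_n => M i j) hT.
  rewrite /= mul_mx_diag mul_diag_mx !mxE.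
  have [->|hz] := eqVneq (T i j) 0; first by rewrite !(mulr0, mul0r).

  move=> h; have : realC (d 0 j) = realC (e 0 i).
    by apply: (mulfI hz); rewrite h mulrC.
  by move/realC_inj ->; rewrite mulrC.
have hTU : T *m U = W by rewrite /T -mulmxA hUl mulmx1.
rewrite -{2}hTU mulmxA -[ctrmx W *m _ *m T]mulmxA -hTF /T !mulmxA hWl mul1mx.
by [].
Qed.

Lemma mpow_uniq n (X : 'M[C]_n) U d t : spectral_decomp X (U,d) ->
  mpow X t = ctrmx U *m diag_mx (map_mx (fun x => realC (powR x t)) d) *m U.
Proof.
move=> h; have hs := @decomp_some _ _ _ h; rewrite /mpow.
case E: (some_decomp X) hs => [W e] hs /=.
exact: (@decomp_fun_uniq n X W e U d (fun x => powR x t) hs h).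
Qed.


Definition nsq (z : C) : R := complex.Re z ^+ 2 + complex.Im z ^+ 2.
Definition nv {n} (v : 'rV[C]_n) : R := \sum_i nsq (v 0 i).

Lemma nsq_ge0 z : 0 <= nsq z.
Proof. by rewrite /nsq addr_ge0 // sqr_ge0. Qed.

Lemma nsq_gt0 z : z != 0 -> 0 < nsq z.
Proof.
case: z => a b hz; rewrite /nsq /=.
have [ha|ha] := eqVneq a 0.
  have hb : b != 0 by apply: contraNneq hz => hb; rewrite ha hb.
  by rewrite ltr_pwDr ?sqr_ge0 // exprn_even_gt0 //.
by rewrite ltr_pwDl ?sqr_ge0 // exprn_even_gt0 //.
Qed.

Lemma realC_add (a b : R) : realC (a + b) = realC a + realC b.
Proof. by rewrite /realC; apply/eqP; rewrite eq_complex /= addr0 !eqxx. Qed.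

Lemma realC_sum n (F : 'I_n -> R) : realC (\sum_i F i) = \sum_i realC (F i).
Proof.
apply: (big_morph realC realC_add); by [].
Qed.

Lemma mul_realC_conj (z : C) r : z * realC r * z^* = realC (r * nsq z).
Proof.
case: z => a b; rewrite /realC /nsq /=; apply/eqP; rewrite eq_complex /=.
by apply/andP; split; apply/eqP; ring.
Qed.

Lemma mul_conj (z : C) : z * z^* = realC (nsq z).
Proof. by rewrite -[z in z * _]mulr1 -(mul1r (nsq z)) -mul_realC_conj. Qed.

Lemma qf_vec {n} (v : 'rV[C]_n) : (v *m ctrmx v) 0 0 = realC (nv v).
Proof.
rewrite mxE /nv realC_sum; apply: eq_bigr => i _.
by rewrite /ctrmx !mxE mul_conj.
Qed.

Lemma qf_diag {n} (w : 'rV[C]_n) (d : 'rV[R]_n) :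
  (w *m diag_mx (map_mx realC d) *m ctrmx w) 0 0 = realC (\sum_i d 0 i * nsq (w 0 i)).
Proof.
rewrite mxE realC_sum; apply: eq_bigr => i _.
by rewrite mul_mx_diag /ctrmx !mxE mul_realC_conj.
Qed.

Lemma qf_decomp {n} {X : 'M[C]_n} {U d} (v : 'rV[C]_n) : spectral_decomp X (U,d) ->
  (v *m X *m ctrmx v) 0 0 = realC (\sum_i d 0 i * nsq ((v *m ctrmx U) 0 i)).
Proof.
case=> /= hU XU; rewrite -qf_diag.
have -> : v *m X *m ctrmx v = v *m ctrmx U *m diag_mx (map_mx realC d) *m ctrmx (v *m ctrmx U).
  by rewrite ctrmx_mul ctrmxK XU !mulmxA.
by [].
Qed.

Lemma nv_unitary {n} (v : 'rV[C]_n) {U : 'M[C]_n} : U \is unitarymx -> nv (v *m ctrmx U) = nv v.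
Proof.
move=> hU; apply: realC_inj; rewrite -!qf_vec ctrmx_mul ctrmxK.
by rewrite -(mulmxA v) (mulmxA (ctrmx U)) (unitary_l hU) mul1mx.
Qed.

Lemma row_unitary {n} (U : 'M[C]_n) i : U \is unitarymx ->
  row i U *m ctrmx U = delta_mx 0 i.
Proof. by move=> hU; rewrite rowE -mulmxA (unitary_r hU) mulmx1. Qed.

Lemma sum_delta {n} (d : 'rV[R]_n) i :
  \sum_k d 0 k * nsq ((delta_mx 0 i : 'rV[C]_n) 0 k) = d 0 i.
Proof.
rewrite (bigD1 i) //= big1 ?addr0.
  by rewrite mxE !eqxx /nsq /= expr1n expr0n /= addr0 mulr1.
move=> k hk; rewrite mxE eqxx (negPf hk) /= /nsq /=.
by rewrite expr0n /= addr0 mulr0.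
Qed.

Lemma nv_delta {n} i : nv (delta_mx 0 i : 'rV[C]_n) = 1.
Proof.
have := sum_delta (const_mx 1) i; rewrite mxE.
by under eq_bigr do rewrite mxE mul1r.
Qed.

Lemma qf_row {n} (X : 'M[C]_n) U d i : spectral_decomp X (U,d) ->
  (row i U *m X *m ctrmx (row i U)) 0 0 = realC (d 0 i).
Proof.
move=> h; rewrite (qf_decomp _ h); case: h => /= hU _.
by rewrite row_unitary // sum_delta.
Qed.

Lemma nv_row {n} (U : 'M[C]_n) i : U \is unitarymx -> nv (row i U) = 1.
Proof. by move=> hU; rewrite -(nv_unitary (row i U) hU) row_unitary // nv_delta. Qed.

Lemma qf_le {n} (X : 'M[C]_n) U d (v : 'rV[C]_n) c : spectral_decomp X (U,d) ->
  (forall i, d 0 i <= c) -> complex.Re ((v *m X *m ctrmx v) 0 0) <= c * nv v.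
Proof.
move=> h hc; rewrite (qf_decomp _ h) /=; case: h => /= hU _.
rewrite -(nv_unitary v hU) /nv mulr_sumr; apply: ler_sum => i _.
by rewrite ler_wpM2r ?nsq_ge0.
Qed.


Arguments decomp_some {n X p} _.
Arguments qf_le {n X U d} v {c} _ _.
Arguments qf_row {n X U d} i _.
Lemma ge_trans : transitive (fun x y : R => y <= x).
Proof. by move=> a b c h1 h2; apply: le_trans h2 h1. Qed.

Lemma ge_total : total (fun x y : R => y <= x).
Proof. by move=> a b; rewrite orbC le_total. Qed.

Lemma eigs_mem {n} (X : 'M[C]_n.+1) : exists j, lambda X ord0 = (some_decomp X).2 0 j.
Proof.
have : lambda X ord0 \in eigs X.
  by apply: mem_nth; rewrite /eigs size_sort size_map size_enum_ord.
rewrite /eigs mem_sort => /mapP [j _ ->]; by exists j.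
Qed.

Lemma eigs_max {n} (X : 'M[C]_n.+1) j : (some_decomp X).2 0 j <= lambda X ord0.
Proof.
rewrite /lambda.
have hm : (some_decomp X).2 0 j \in eigs X.
  by rewrite /eigs mem_sort; apply: map_f; rewrite mem_enum.
have hs : sorted (fun x y : R => y <= x) (eigs X) by apply: sort_sorted; exact: ge_total.
move: hm hs; case: (eigs X) => [//|x l] /=.
rewrite in_cons => /orP [/eqP -> _ | hl hp]; first by [].
have := order_path_min ge_trans hp => /allP /(_ _ hl); by [].
Qed.

Lemma lam_ge {n} (X : 'M[C]_n.+1) p (v : 'rV[C]_n.+1) : spectral_decomp X p ->
  nv v = 1 -> complex.Re ((v *m X *m ctrmx v) 0 0) <= lambda X ord0.
Proof.
move=> h hv; have hs := decomp_some h.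
have hm := @eigs_max n X.
case E: (some_decomp X) hs hm => [W e] hs hm.
by have := qf_le v hs hm; rewrite hv mulr1.
Qed.

Arguments lam_ge {n X p} v _ _.

Lemma lam_ge_d {n} (X : 'M[C]_n.+1) U d i : spectral_decomp X (U,d) ->
  d 0 i <= lambda X ord0.
Proof.
move=> h; have := lam_ge (row i U) h; rewrite (qf_row _ h).
by case: h => /= hU _; rewrite nv_row //; apply.
Qed.

Lemma lam_le {n} (X : 'M[C]_n.+1) U d c : spectral_decomp X (U,d) ->
  (forall i, d 0 i <= c) -> lambda X ord0 <= c.
Proof.
move=> h hc; have hs := decomp_some h.
have [j ->] := eigs_mem X.
case E: (some_decomp X) hs => [W e] hs /=.
have := qf_le (row j W) h hc; rewrite (qf_row _ hs).
by case: hs => /= hW _; rewrite nv_row // mulr1.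
Qed.

Lemma posdef_decomp {n} (X : 'M[C]_n) U d : spectral_decomp X (U,d) ->
  (forall i, 0 < d 0 i) -> posdef X.
Proof.
move=> h hd; have hq := qf_decomp^~ h; case: h => /= hU XU; split.
  by rewrite XU !ctrmx_mul ctrmxK ctrmx_diag mulmxA.
move=> v hv; rewrite hq ltcE /= eqxx /=.
set w := v *m ctrmx U.
have [i hi] : exists i, w 0 i != 0.
  case/boolP: [exists i, w 0 i != 0] => [/existsP hex|/existsPn hn]; first exact: hex.
  have hw : w = 0 by apply/matrixP => a b; rewrite ord1 [RHS]mxE; exact/eqP/negPn/hn.
  have : v = w *m U by rewrite /w -mulmxA (unitary_l hU) mulmx1.
  by rewrite hw mul0mx => hv0; rewrite hv0 eqxx in hv.
rewrite (bigD1 i) //= ltr_pwDl ?mulr_gt0 ?nsq_gt0 //.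
by apply: sumr_ge0 => k _; rewrite mulr_ge0 ?nsq_ge0 // ltW.
Qed.


Lemma key_real (r s : R) : 0 <= r -> 0 < s -> s < 1 ->
  1 - r * (s / (1 - s)) <= powR (1 - s) r.
Proof.
move=> hr hs0 hs1.
have h1s : 0 < 1 - s by rewrite subr_gt0.
have hx : -1 < s / (1 - s) by apply: lt_le_trans (divr_ge0 (ltW hs0) (ltW h1s)); rewrite oppr_lt0.
have hl := le_ln1Dx hx.
have hinv : 1 + s / (1 - s) = (1 - s)^-1.
  by field; rewrite subr_eq0 eq_sym lt_eqF.
rewrite hinv lnV ?posrE // in hl.
rewrite /powR (negPf (lt0r_neq0 h1s)).
apply: le_trans (expR_ge1Dx _).
move: hl; set t := s / (1 - s); set L := ln (1 - s) => hl.
nra.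
Qed.


Lemma big2 (V : nmodType) (F : 'I_2 -> V) : \sum_i F i = F ord0 + F (lift ord0 ord0).
Proof. by rewrite big_ord_recl big_ord1. Qed.

Lemma ctrmx1 n : ctrmx (1%:M : 'M[C]_n) = 1%:M.
Proof. by rewrite /ctrmx trmx1 map_mx1. Qed.

Lemma unitary1 n : (1%:M : 'M[C]_n) \is unitarymx.
Proof. apply/unitarymxP; change (1%:M *m ctrmx (1%:M : 'M[C]_n) = 1%:M). by rewrite ctrmx1 mulmx1. Qed.

Lemma realC_mul (a b : R) : realC a * realC b = realC (a * b).
Proof. by rewrite /realC; apply/eqP; rewrite eq_complex /= !mulr0 mul0r subr0 addr0 !eqxx. Qed.

Lemma Re_realC (a : R) : complex.Re (realC a) = a.
Proof. by []. Qed.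

Lemma mpow_decomp n (X : 'M[C]_n) U d t : spectral_decomp X (U,d) ->
  spectral_decomp (mpow X t) (U, map_mx (fun x => powR x t) d).
Proof.
move=> h; have E := @mpow_uniq n X U d t h; case: h => /= hU _; split => /=; first exact: hU.
rewrite E -map_mx_comp; by [].
Qed.

Lemma decomp_herm n (X : 'M[C]_n) U d : spectral_decomp X (U,d) -> ctrmx X = X.
Proof. by case=> /= hU XU; rewrite XU !ctrmx_mul ctrmxK ctrmx_diag mulmxA. Qed.

Definition dg (a b : R) : 'rV[R]_2 := \row_(j < 2) (if j == ord0 then a else b).

Lemma map_dg (f : R -> R) a b : map_mx f (dg a b) = dg (f a) (f b).
Proof. by apply/matrixP => i j; rewrite !mxE; case: ifP. Qed.

Lemma dg0 a b : dg a b 0 ord0 = a. Proof. by rewrite mxE. Qed.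
Lemma dg1 a b : dg a b 0 (lift ord0 ord0) = b. Proof. by rewrite mxE. Qed.

Definition rot (c s : R) : 'M[C]_2 := \matrix_(i < 2, j < 2)
  realC (if i == ord0 then (if j == ord0 then c else s) else (if j == ord0 then - s else c)).

Lemma rot_unitary c s : c ^+ 2 + s ^+ 2 = 1 -> rot c s \is unitarymx.
Proof.
move=> h; apply/unitarymxP; apply/matrixP => i j.
rewrite !mxE big2 !mxE.
case: i => [[|[|//]] hi]; case: j => [[|[|//]] hj]; rewrite /= ?mulr1n ?mulr0n !conj_realC !realC_mul -realC_add;
  apply/eqP; rewrite eq_complex /= eqxx andbT; apply/eqP; nra.
Qed.

Lemma decA (x : R) : spectral_decomp (diag_mx (map_mx realC (dg 1 x))) (1%:M, dg 1 x).
Proof. split => /=; first exact: unitary1. by rewrite ctrmx1 mul1mx mulmx1. Qed.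

Lemma decB (V : 'M[C]_2) (x : R) : V \is unitarymx ->
  spectral_decomp (ctrmx V *m diag_mx (map_mx realC (dg 1 x)) *m V) (V, dg 1 x).
Proof. by move=> hV; split. Qed.


Lemma entry_lin (M N : 'M[C]_1) (x y : C) : (x *: M + y *: N) 0 0 = x * M 0 0 + y * N 0 0.
Proof. by rewrite !mxE. Qed.

Lemma qf_lin (X Y : 'M[C]_2) (v : 'rV[C]_2) x y :
  v *m (x *: X + y *: Y) *m ctrmx v = x *: (v *m X *m ctrmx v) + y *: (v *m Y *m ctrmx v).
Proof. by rewrite mulmxDr mulmxDl -!scalemxAr -!scalemxAl. Qed.

Lemma qfN (a c0 s0 e : R) (Aq Bq : 'M[C]_2) (v : 'rV[C]_2) :
  0 <= a -> a <= 1 -> c0 ^+ 2 + s0 ^+ 2 = 1 -> 0 <= e -> nv v = 1 ->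
  spectral_decomp Aq (1%:M, dg 1 e) -> spectral_decomp Bq (rot c0 s0, dg 1 e) ->
  0 <= complex.Re ((v *m (realC (1 - a) *: Aq + realC a *: Bq) *m ctrmx v) 0 0) <=
     1 - a * (1 - a) * s0 ^+ 2 + e.
Proof.
move=> ha0 ha1 hcs he hv hA hB.
rewrite qf_lin entry_lin (qf_decomp v hA) (qf_decomp v hB).
rewrite !realC_mul -realC_add Re_realC ctrmx1 mulmx1 !big2 !dg0 !dg1 !mul1r.
rewrite !mxE !big2 !mxE /= !conj_realC.
rewrite /nv big2 in hv.
move: (v 0 ord0) (v 0 (lift ord0 ord0)) hv => [x1 x2] [y1 y2].
rewrite /nsq /= => hv.
rewrite ?mulr0 ?subr0 ?mul0r ?add0r ?addr0.
set X := x1 ^+ 2 + x2 ^+ 2; set Y := y1 ^+ 2 + y2 ^+ 2.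
set W0 := _ + (x2 * c0 + y2 * s0) ^+ 2.
set W1 := _ + (x2 * - s0 + y2 * c0) ^+ 2.
have hXY : X + Y = 1 by move: hv; rewrite /X /Y; lra.
have hX : 0 <= X by rewrite /X addr_ge0 ?sqr_ge0.
have hY : 0 <= Y by rewrite /Y addr_ge0 ?sqr_ge0.
have hW0 : 0 <= W0 by rewrite /W0 addr_ge0 ?sqr_ge0.
have hW1 : 0 <= W1 by rewrite /W1 addr_ge0 ?sqr_ge0.
have hW : W0 + W1 = 1.
  have -> : W0 + W1 = (c0 ^+ 2 + s0 ^+ 2) * (X + Y) by rewrite /W0 /W1 /X /Y; ring.
  by rewrite hcs mul1r.
have h1 : (1 - a) * X + a * W0 <= 1 - a * (1 - a) * s0 ^+ 2.
  have E : (1 - a * (1 - a) * s0 ^+ 2) * (X + Y) - ((1 - a) * X + a * W0) =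
    (a * s0 * x1 - c0 * y1) ^+ 2 + (a * s0 * x2 - c0 * y2) ^+ 2
    + s0 ^+ 2 * (1 - a) ^+ 2 * Y - a * (c0 ^+ 2 + s0 ^+ 2 - 1) * X
    - (c0 ^+ 2 + s0 ^+ 2 - 1) * Y.
    by rewrite /W0 /X /Y; ring.
  rewrite hcs subrr mulr0 !mul0r !subr0 hXY mulr1 in E.
  have : 0 <= (a * s0 * x1 - c0 * y1) ^+ 2 + (a * s0 * x2 - c0 * y2) ^+ 2
    + s0 ^+ 2 * (1 - a) ^+ 2 * Y.
    by rewrite !addr_ge0 ?sqr_ge0 // mulr_ge0 // mulr_ge0 ?sqr_ge0.
  rewrite -E subr_ge0; by [].
have hY1 : Y <= 1 by lra.
have hW11 : W1 <= 1 by lra.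
have h1a : 0 <= 1 - a by lra.
have h2a : (1 - a) * Y <= 1 - a by rewrite ler_piMr.
have h2b : a * W1 <= a by rewrite ler_piMr.
have h2 : (1 - a) * Y + a * W1 <= 1 by lra.
have h3 : 0 <= (1 - a) * Y + a * W1 by nra.
have h4 : 0 <= (1 - a) * X + a * W0 by nra.
apply/andP; split; nra.
Qed.


Lemma realC1 : realC 1 = 1. Proof. by []. Qed.

Lemma qfM (c0 s0 x y : R) (Aa Bb : 'M[C]_2) :
  0 <= y ->
  spectral_decomp Aa (1%:M, dg 1 x) -> spectral_decomp Bb (rot c0 s0, dg 1 y) ->
  c0 ^+ 2 <= complex.Re (((delta_mx 0 ord0 : 'rV[C]_2) *m (Aa *m Bb *m Aa) *m ctrmx (delta_mx 0 ord0 : 'rV[C]_2)) 0 0).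
Proof.
move=> hy hA hB.
set e1 := (delta_mx 0 ord0 : 'rV[C]_2).
have hAh : ctrmx Aa = Aa := @decomp_herm _ _ _ _ hA.
have he : e1 *m Aa = e1.
  case: hA => /= _ ->; rewrite ctrmx1 mul1mx mulmx1.
  apply/matrixP => i j; rewrite mul_mx_diag !mxE.
  by case: (j == ord0); rewrite ?andbT ?andbF /= ?mulr1 ?mul0r.
have hc : Aa *m ctrmx e1 = ctrmx e1 by rewrite -{1}hAh -ctrmx_mul he.
have -> : e1 *m (Aa *m Bb *m Aa) *m ctrmx e1 = e1 *m Bb *m ctrmx e1.
  by rewrite !mulmxA he -[e1 *m Bb *m Aa *m _]mulmxA hc.
rewrite (qf_decomp e1 hB) Re_realC big2 dg0 dg1 mul1r.
rewrite /e1 !mxE !big2 !mxE /= !conj_realC.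
rewrite !mul1r !mul0r !addr0 /nsq /= expr0n /= addr0.
by rewrite lerDl mulr_ge0 // addr_ge0 ?sqr_ge0.
Qed.


Lemma herm3 n (X Y : 'M[C]_n) : ctrmx X = X -> ctrmx Y = Y -> ctrmx (X *m Y *m X) = X *m Y *m X.
Proof. by move=> hX hY; rewrite !ctrmx_mul hX hY mulmxA. Qed.

Lemma herm_lin n (X Y : 'M[C]_n) a b : ctrmx X = X -> ctrmx Y = Y ->
  ctrmx (realC a *: X + realC b *: Y) = realC a *: X + realC b *: Y.
Proof. by move=> hX hY; rewrite ctrmxD !ctrmxZ hX hY. Qed.

End Helpers.

Arguments decomp_herm {R n X U d}.
Arguments decomp_some {R n X p} _.
Arguments qf_row {R n X U d} i _.
Arguments lam_ge {R n X p} v _ _.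
Arguments eigs_mem {R n} X.
Arguments herm_decomp {R n X}.
Arguments herm_lin {R n X Y a b}.
Arguments herm3 {R n X Y}.
Arguments qfM {R c0 s0 x y Aa Bb}.
Arguments qfN {R a c0 s0 e Aq Bq} v.
Arguments mpow_decomp {R n X U d} t.
Arguments posdef_decomp {R n X U d}.
Arguments lam_ge_d {R n X U d} i.
Arguments lam_le {R n X U d} c.

Theorem theorem4p10 (R : realType) (alpha p q : R) :
  0 < alpha -> alpha < 1 -> 0 < p -> 0 < q ->
  (forall A B : 'M[R[i]]_2, posdef A -> posdef B ->
     le_lambda (Rmean alpha p A B) (Amean alpha q A B)) ->
  alpha * (1 - alpha) * p <= q.
Proof.
move=> ha0 ha1 hp hq H.
rewrite leNgt; apply/negP => hlt.
set b := alpha * (1 - alpha).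
have hb : 0 < b by rewrite mulr_gt0 // subr_gt0.
set r := q / p.
have hr0 : 0 < r by rewrite divr_gt0.
have hrb : r < b by rewrite ltr_pdivrMr.
have ebr : b * (r / b) = r by field; rewrite lt0r_neq0.
have hrb1 : r / b < 1 by rewrite ltr_pdivrMr // mul1r.
have hrb0 : 0 < r / b by rewrite divr_gt0.
set s := (1 - r / b) / 2.
have hs0 : 0 < s by rewrite /s divr_gt0 // subr_gt0.
have hs1 : s < 1 by rewrite /s ltr_pdivrMr //; lra.
have h1s : 0 < 1 - s by rewrite subr_gt0.
have hrbs : r < b * (1 - s) by rewrite /s; nra.
have hq1 : r / (1 - s) < b by rewrite ltr_pdivrMr.
set m := b * s - r * (s / (1 - s)).
have hm : 0 < m.
  by rewrite /m subr_gt0 mulrCA (mulrC b s) ltr_pM2l.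
set eps := m / 2.
have heps : 0 < eps by rewrite divr_gt0.
set delta := powR eps q^-1.
have hd : 0 < delta by apply: powR_gt0.
have hdq : powR delta q = eps.
  by rewrite /delta -powRrM mulVf ?lt0r_neq0 // powRr1 // ltW.
set c0 := Num.sqrt (1 - s); set s0 := Num.sqrt s.
have hc2 : c0 ^+ 2 = 1 - s by rewrite sqr_sqrtr // ltW.
have hs2 : s0 ^+ 2 = s by rewrite sqr_sqrtr // ltW.
have hcs : c0 ^+ 2 + s0 ^+ 2 = 1 by rewrite hc2 hs2 subrK.
have hV := rot_unitary c0 s0 hcs.
set V := rot c0 s0 in hV *.

set A := diag_mx (map_mx (@realC R) (dg 1 delta)).
set B := ctrmx V *m A *m V.
have dA : spectral_decomp A (1%:M, dg 1 delta) := decA delta.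
have dB : spectral_decomp B (V, dg 1 delta) := decB V delta hV.
have hpos : forall i, 0 < dg 1 delta 0 i by move=> i; rewrite mxE; case: ifP.
have pA : posdef A := posdef_decomp dA hpos.
have pB : posdef B := posdef_decomp dB hpos.
have HL := H A B pA pB ord0.
rewrite /Rmean /Amean in HL.
set t := (1 - alpha) * p / 2 in HL.
have dAt : spectral_decomp (mpow A t) (1%:M, dg 1 (powR delta t)).
  by have := mpow_decomp t dA; rewrite map_dg powR1.
have dBb : spectral_decomp (mpow B (alpha * p)) (V, dg 1 (powR delta (alpha * p))).
  by have := mpow_decomp (alpha * p) dB; rewrite map_dg powR1.
set M := mpow A t *m mpow B (alpha * p) *m mpow A t in HL.
have hMh : ctrmx M = M.
  exact: herm3 (decomp_herm dAt) (decomp_herm dBb).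
have [pM hpM] := herm_decomp hMh.
have lamM : c0 ^+ 2 <= lambda M ord0.
  apply: le_trans (qfM (powR_ge0 _ _) dAt dBb) _.
  by apply: lam_ge hpM _; rewrite nv_delta.
have [j hj] := eigs_mem M.
have dM := decomp_some hpM.
case EM: (some_decomp M) dM hj => [W e] dM hj.
have dR := mpow_decomp p^-1 dM.
have lamR := lam_ge_d j dR.
rewrite mxE in lamR.
have hej : 1 - s <= e 0 j by rewrite -hc2 -[e 0 j]/((W, e).2 0 j) -hj.
have lowR : powR (1 - s) p^-1 <= lambda (mpow M p^-1) ord0.
  have he0 : 0 <= e 0 j := le_trans (ltW h1s) hej.
  refine (le_trans _ lamR); apply: ge0_ler_powR.
  - by rewrite invr_ge0 ltW.
  - by rewrite nnegrE ltW.
  - by rewrite nnegrE.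
  - exact: hej.
have dAq : spectral_decomp (mpow A q) (1%:M, dg 1 eps).
  by have := mpow_decomp q dA; rewrite map_dg powR1 hdq.
have dBq : spectral_decomp (mpow B q) (V, dg 1 eps).
  by have := mpow_decomp q dB; rewrite map_dg powR1 hdq.
set N := realC (1 - alpha) *: mpow A q + realC alpha *: mpow B q in HL.
have hNh : ctrmx N = N := herm_lin (decomp_herm dAq) (decomp_herm dBq).
have [pN hpN] := herm_decomp hNh.
have dN := decomp_some hpN.
case EN: (some_decomp N) dN => [W' e'] dN.
set K := 1 - b * s + eps.
have he' : forall i, 0 <= e' 0 i <= K.
  move=> i; have := qfN (row i W') (ltW ha0) (ltW ha1) hcs (ltW heps) _ dAq dBq.
  rewrite (qf_row i dN) Re_realC hs2; apply.
  by case: dN => /= hW _; exact: nv_row.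
have dA' := mpow_decomp q^-1 dN.
have upR : lambda (mpow N q^-1) ord0 <= powR K q^-1.
  apply: (lam_le _ dA') => i; rewrite mxE.
  have /andP [h0 h1] := he' i.
  apply: ge0_ler_powR.
  - by rewrite invr_ge0 ltW.
  - by rewrite nnegrE.
  - by rewrite nnegrE (le_trans h0 h1).
  - exact: h1.
have hfin : powR (1 - s) p^-1 <= powR K q^-1 by apply: le_trans lowR (le_trans HL upR).
have hK0 : 0 <= K by have /andP [h0 h1] := he' ord0; apply: le_trans h1.
have := ge0_ler_powR (ltW hq) _ _ hfin.
rewrite !nnegrE !powR_ge0 => /(_ isT isT).
rewrite -!powRrM mulVf ?lt0r_neq0 // powRr1 // (mulrC p^-1 q) -/r => hfin2.
have := key_real r s (ltW hr0) hs0 hs1.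
have em : m = b * s - r * (s / (1 - s)) by [].
have ee : eps = m / 2 by [].
have eK : K = 1 - b * s + eps by [].
lra.
Qed.
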